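(* Suppose each $D_{ij}$ is strictly increasing. Let $(\phi,x)$ with binary caching decisions $x_i(k)\in\{0,1\}$ be feasible for the joint routing and caching problem, and suppose it contains a routing loop with strictly positive flow, i.e. a sequence of nodes $(l_1,\dots,l_{m})$ with $l_1=l_m$ and an item $k$ such that $\phi_{l_pl_{p+1}}(k)>0$ for $p=1,\dots,m-1$ and $t_{l_1}(k)>0$. Then there exists a feasible $(\phi',x')$ with $T(\phi',x')<T(\phi,x)$, where $T=\sum_{(i,j)\in\mathcal E}D_{ij}(F_{ij})+\sum_iB_i(Y_i)$.
   Context: Network model. $\mathcal G=(\mathcal V,\mathcal E)$ is a finite directed graph with $(j,i)\in\mathcal E$ whenever $(i,j)\in\mathcal E$; $\mathcal N(i)=\{j:(i,j)\in\mathcal E\}$. $\mathcal C$ is a finite catalog; item $k$ has nonempty designated server set $\mathcal S_k\subseteq\mathcal V$. Exogenous request rates $r_i(k)\ge0$. Variables: $\phi_{ij}(k)\in[0,1]$ with $\phi_{ij}(k)=0$ if $(i,j)\notin\mathcal E$, and caching variables (here binary $x_i(k)$, generally $y_i(k)\in[0,1]$). Flow conservation: $x_i(k)+\sum_{j}\phi_{ij}(k)=1$ if $i\notin\mathcal S_k$ and $=0$ if $i\in\mathcal S_k$. A pair is feasible if it satisfies these constraints and the arrival rates $t_i(k)$, solving $t_i(k)=r_i(k)+\sum_j t_j(k)\phi_{ji}(k)$, are uniquely determined, nonnegative and finite. $f_{ji}(k)=t_i(k)\phi_{ij}(k)$, $F_{ij}=\sum_k f_{ij}(k)$, $Y_i=\sum_k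 x_i(k)$. $D_{ij},B_i$ are continuously differentiable, increasing, convex, zero at $0$. *)

(* Defs.v *)
From HB Require Import structures.
From mathcomp Require Import all_boot all_order all_algebra.
From mathcomp Require Import all_classical all_reals all_analysis.
Set Implicit Arguments. Unset Strict Implicit. Unset Printing Implicit Defensive.
Import Order.TTheory GRing.Theory Num.Theory.
Import numFieldNormedType.Exports.
Local Open Scope classical_set_scope.
Local Open Scope ring_scope.

Section Network.
Variables (R : realType) (V C : finType).
(* E i j : (i,j) is an edge; S k : designated servers of item k;
   r i k : exogenous request rate of item k at node i. *)
Variables (E : rel V) (S : C -> {set V}) (r : V -> C -> R).

Definition is_arrival_rates (phi : V -> V -> C -> R) (t : V -> C -> R) : Prop :=
  forall i k, t i k = r i k + \sum_(j : V) t j k * phi j i k.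

Definition feasible (phi : V -> V -> C -> R) (x : V -> C -> bool) : Prop :=
  [/\ (forall i j k, 0 <= phi i j k <= 1),
      (forall i j k, ~~ E i j -> phi i j k = 0),
      (forall i k, (x i k)%:R + \sum_(j : V) phi i j k
                     = (if i \in S k then 0 else 1)),
      (exists t, is_arrival_rates phi t /\
                 forall t', is_arrival_rates phi t' -> t' = t) &
      (forall t, is_arrival_rates phi t -> forall i k, 0 <= t i k)].

Definition link_flow (phi : V -> V -> C -> R) (t : V -> C -> R) (i j : V) : R :=
  \sum_(k : C) t j k * phi j i k.

Definition cache_occupancy (x : V -> C -> bool) (i : V) : R :=
  \sum_(k : C) (x i k)%:R.

Definition total_cost (D : V -> V -> R -> R) (B : V -> R -> R)
  (phi : V -> V -> C -> R) (x : V -> C -> bool) (t : V -> C -> R) : R :=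
  \sum_(i : V) \sum_(j : V | E i j) D i j (link_flow phi t i j)
  + \sum_(i : V) B i (cache_occupancy x i).

End Network.

Definition cost_fun_ok (R : realType) (f : R -> R) : Prop :=
  [/\ f 0 = 0,
      (forall u v : R, 0 <= u -> u <= v -> f u <= f v),
      (forall (u v a : R), 0 <= u -> 0 <= v -> 0 <= a <= 1 ->
          f (a * u + (1 - a) * v) <= a * f u + (1 - a) * f v),
      (forall u : R, 0 <= u -> derivable f u 1) &
      (forall u : R, 0 <= u -> {for u, continuous (derive1 f)})].

Definition strictly_increasing_nonneg (R : realType) (f : R -> R) : Prop :=
  forall u v : R, 0 <= u -> u < v -> f u < f v.

(* Main.v *)
Require Import Defs.
From HB Require Import structures.
From mathcomp Require Import all_boot all_order all_algebra.
From mathcomp Require Import all_classical all_reals all_analysis.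
From mathcomp Require Import lra.
Import Order.TTheory GRing.Theory Num.Theory.
Local Open Scope ring_scope.

Section SingleA.
Set Implicit Arguments. Unset Strict Implicit.
Variables (R : realFieldType) (V : finType).

Definition hsol (P : V -> V -> R) (u : V -> R) := forall i, u i = \sum_j u j * P j i.
Definition huniq (P : V -> V -> R) := forall u, hsol P u -> forall i, u i = 0.

Lemma hsol_trap (P : V -> V -> R) (sg : V -> R) u z :
  (forall i j, 0 <= P i j) -> (forall i, \sum_j P i j = sg i) -> (forall i, sg i <= 1) ->
  hsol P u -> u z != 0 -> sg z = 1 /\ (forall j, 0 < P z j -> u j != 0).
Proof.
move=> P0 hsg sg1 hu uz.
pose a i := `|u i|.
have a0 i : 0 <= a i by rewrite /a normr_ge0.
have h1 i : a i <= \sum_j a j * P j i.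
  rewrite /a {1}(hu i); apply: le_trans (ler_norm_sum _ _ _) _.
  by apply: ler_sum => j _; rewrite normrM (ger0_norm (P0 _ _)).
pose d i := \sum_j a j * P j i - a i.
pose e j := a j - a j * sg j.
have d0 i : 0 <= d i by rewrite /d subr_ge0.
have e0 j : 0 <= e j.
  rewrite /e subr_ge0 -{2}(mulr1 (a j)); by apply: ler_wpM2l.
have hs : \sum_i d i + \sum_j e j = 0.
  rewrite /d /e !sumrB.
  have -> : \sum_i \sum_j a j * P j i = \sum_j a j * sg j.
    rewrite exchange_big /=; apply: eq_bigr => j _; by rewrite -mulr_sumr hsg.
  by rewrite addrA subrK subrr.
move/eqP: hs; rewrite paddr_eq0 ?sumr_ge0 // => /andP[/eqP hd /eqP he].
have dz := psumr_eq0P (fun i _ => d0 i) hd.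
have ez := psumr_eq0P (fun i _ => e0 i) he.
have az : 0 < a z by rewrite /a normr_gt0.
split.
  have := ez z isT; rewrite /e => /eqP; rewrite subr_eq0 => /eqP H.
  apply: (mulfI (lt0r_neq0 az)); by rewrite mulr1 -H.
move=> j Pzj.
have := dz j isT; rewrite /d => /eqP; rewrite subr_eq0 => /eqP H.
rewrite -normr_gt0 -/(a j) -H (bigD1 z) //=.
apply: (lt_le_trans (mulr_gt0 az Pzj)); rewrite lerDl sumr_ge0 // => i _.
exact: mulr_ge0.
Qed.

End SingleA.

Section SingleB.
Set Implicit Arguments. Unset Strict Implicit.
Variables (R : realFieldType) (V : finType).

Lemma sum_enum (F : V -> R) : \sum_j F j = \sum_(b < #|V|) F (enum_val b).
Proof. by rewrite -big_enum_val. Qed.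

Lemma trap_hsol (P : V -> V -> R) (Z : {set V}) z :
  (forall i j, 0 <= P i j) -> z \in Z ->
  (forall i, i \in Z -> \sum_j P i j = 1) ->
  (forall i j, i \in Z -> 0 < P i j -> j \in Z) ->
  exists u, hsol P u /\ exists i, u i != 0.
Proof.
move=> P0 zZ hs hcl.
have hcl0 i j : i \in Z -> j \notin Z -> P i j = 0.
  move=> iZ jZ; apply/eqP; rewrite eq_le P0 andbT leNgt; apply/negP => /(hcl _ _ iZ).
  by rewrite (negbTE jZ).
pose n := #|V|.
pose ev := (@enum_val V (pred_of_simpl predT)).
pose Q : 'M[R]_n := \matrix_(a, b) (if ev a \in Z then P (ev a) (ev b) else 0).
pose A := 1%:M - Q.
pose w : 'rV[R]_n := \row_b (if ev b \in Z then 1 else 0).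
have wn0 : w != 0.
  apply/negP => /eqP/matrixP/(_ 0 (enum_rank z)); rewrite !mxE /ev enum_rankK zZ.
  by move/eqP; rewrite oner_eq0.
have : \det A^T == 0.
  apply/det0P; exists w => //; apply/matrixP => i0 a; rewrite !mxE.
  rewrite (eq_bigr (fun b => w 0 b * (((a == b)%:R) - Q a b))); last first.
    by move=> b _; rewrite !mxE.
  under eq_bigr do rewrite mulrBr.
  rewrite sumrB.
  rewrite (bigD1 a) //= eqxx mulr1 big1 ?addr0; last first.
    by move=> b nba; rewrite eq_sym (negbTE nba) mulr0.
  rewrite !mxE.
  under eq_bigr do rewrite !mxE.
  case: ifP => aZ; last by rewrite big1 ?subrr // => b _; rewrite mulr0.
  rewrite -[X in X - _](hs _ aZ) sum_enum; apply/eqP; rewrite subr_eq0; apply/eqP.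
  apply: eq_bigr => b _; case: ifP => bZ; first by rewrite mul1r.
  by rewrite mul0r hcl0 // bZ.
rewrite det_tr => /det0P [v vn0 hv].
pose u i := v 0 (enum_rank i).
have hv' b : v 0 b = \sum_a v 0 a * Q a b.
  move/matrixP: hv => /(_ 0 b); rewrite !mxE.
  under eq_bigr do rewrite !mxE mulrBr.
  rewrite sumrB (bigD1 b) //= eqxx mulr1 big1 ?addr0; last first.
    by move=> c ncb; rewrite (negbTE ncb) mulr0.
  by move/eqP; rewrite subr_eq0 => /eqP ->; apply: eq_bigr => a _; rewrite mxE.
have uZ i : i \notin Z -> u i = 0.
  move=> iZ; rewrite /u hv' big1 // => a _; rewrite mxE.
  case: ifP => aZ; last by rewrite mulr0.
  by rewrite /ev enum_rankK hcl0 // mulr0.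
exists u; split.
  move=> i; rewrite /u hv' sum_enum; apply: eq_bigr => a _.
  rewrite mxE /ev enum_valK enum_rankK; case: ifP => aZ //.
  have := uZ (enum_val a); rewrite /ev in aZ; rewrite aZ /u enum_valK => -> //; by rewrite !mul0r.
have [b vb] : exists b, v 0 b != 0.
  apply/existsP; move: vn0; apply: contraR; rewrite negb_exists => /forallP H.
  by apply/eqP/matrixP => i j; rewrite !mxE (ord1 i); apply/eqP; move: (H j); rewrite negbK.
by exists (enum_val b); rewrite /u enum_valK.
Qed.
End SingleB.

Section Cyc.
Set Implicit Arguments. Unset Strict Implicit.
Variables (R : realFieldType) (V : finType).

Lemma cycle_extract (s : V -> V) (W0 : {set V}) :
  W0 != finset.set0 -> (forall w, w \in W0 -> s w \in W0) ->
  exists W : {set V}, [/\ W \subset W0, W != finset.set0,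
    (forall w, w \in W -> s w \in W) & {in W &, injective s}].
Proof.
have [n] := ubnP #|W0|; elim: n W0 => // n IH W0 hn ne cl.
case: (boolP (#|s @: W0| == #|W0|)) => h.
  by exists W0; split => //; apply/imset_injP.
have sub : s @: W0 \subset W0.
  by apply/fintype.subsetP => x /imsetP [v vW ->]; apply: cl.
have lt : (#|s @: W0| < n)%N.
  rewrite ltnS in hn; apply: leq_trans _ hn; by rewrite ltn_neqAle h leq_imset_card.
have [||W [h1 h2 h3 h4]] := IH (s @: W0) lt.
- by rewrite imset_eq0.
- by move=> w /imsetP [v vW ->]; apply: imset_f; apply: cl.
by exists W; split => //; apply: fintype.subset_trans h1 sub.
Qed.

Lemma count_cycle (s : V -> V) (W : {set V}) (e : R) i :
  (forall w, w \in W -> s w \in W) -> {in W &, injective s} ->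
  \sum_j (if (j \in W) && (i == s j) then e else 0) = if i \in W then e else 0.
Proof.
move=> cl inj.
have eqW : s @: W = W.
  apply/eqP; rewrite eqEcard (card_in_imset inj) leqnn andbT.
  by apply/fintype.subsetP => x /imsetP [v vW ->]; apply: cl.
case: (boolP (i \in W)) => iW.
  move: iW; rewrite -{1}eqW => /imsetP [j0 j0W ->].
  rewrite (bigD1 j0) //= j0W eqxx big1 ?addr0 // => j nj.
  case: (boolP (j \in W)) => //= jW; case: eqP => // /esym /(inj _ _ jW j0W) ej.
  by rewrite ej eqxx in nj.
apply: big1 => j _; case: (boolP (j \in W)) => //= jW.
by case: eqP => // ei; rewrite ei cl in iW.
Qed.

Variable (E : rel V) (sg rho : V -> R).

Definition validflow (g : V -> V -> R) :=
  [/\ forall i j, 0 <= g i j, forall i j, ~~ E i j -> g i j = 0 &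
      forall i, \sum_j g i j = sg i * (rho i + \sum_j g j i)].

Lemma cancel_cycle g (W : {set V}) s :
  validflow g -> W != finset.set0 -> (forall w, w \in W -> s w \in W) -> {in W &, injective s} ->
  (forall w, w \in W -> 0 < g w (s w)) -> (forall w, w \in W -> sg w = 1) ->
  exists g', [/\ validflow g', forall i j, g' i j <= g i j &
                 exists a b, 0 < g a b /\ g' a b = 0].
Proof.
move=> [g0 gE gc] ne cl inj gpos sg1.
have [z zW] := set0Pn _ ne.
case: (arg_minP (fun w => g w (s w)) zW) => w0 w0W hmin.
pose e := g w0 (s w0).
pose g' i j := g i j - (if (i \in W) && (j == s i) then e else 0).
exists g'; split.
- split.
  + move=> i j; rewrite /g'; case: (boolP (i \in W)) => //= iW; last by rewrite subr0.
    case: eqP => [->|_]; last by rewrite subr0.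
    by rewrite subr_ge0 hmin.
  + move=> i j nE; rewrite /g' gE //; case: (boolP (i \in W)) => //= iW; last by rewrite subr0.
    case: eqP => [ej|_]; last by rewrite subr0.
    by have := gpos _ iW; rewrite -ej gE // ltxx.
  + move=> i; rewrite /g' !sumrB count_cycle //.
    have -> : \sum_j (if (i \in W) && (j == s i) then e else 0) = if i \in W then e else 0.
      case: (boolP (i \in W)) => /= iW; last by rewrite big1.
      by rewrite -big_mkcond /= big_pred1_eq.
    rewrite gc; case: ifP => iW; last by rewrite !subr0.
    by rewrite sg1 // !mul1r addrA.
- move=> i j; rewrite /g' lerBlDr lerDl; case: ifP => // _; exact: g0.
- exists w0, (s w0); split; first exact: gpos.
  by rewrite /g' ifT ?subrr // eqxx andbT; exact: w0W.

Qed.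

End Cyc.

Section Main.
Set Implicit Arguments. Unset Strict Implicit.
Variables (R : realFieldType) (V : finType).
Variable (E : rel V) (sg rho : V -> R).
Hypothesis rho0 : forall i, 0 <= rho i.
Hypothesis sg01 : forall i, 0 <= sg i <= 1.

Definition msr (g : V -> V -> R) := #|[set ij : V * V | 0 < g ij.1 ij.2]|.

Lemma flow_feas (P : V -> V -> R) :
  (forall i j, 0 <= P i j) -> (forall i j, ~~ E i j -> P i j = 0) ->
  (forall i, \sum_j P i j = sg i) -> huniq P ->
  forall g, validflow E sg rho g ->
  exists P' (tau : V -> R), [/\ [/\ (forall i j, 0 <= P' i j), (forall i j, ~~ E i j -> P' i j = 0) &
    (forall i, \sum_j P' i j = sg i)], huniq P',
    (forall i, tau i = rho i + \sum_j tau j * P' j i), (forall i, 0 <= tau i) &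
    (forall i j, tau i * P' i j <= g i j)].
Proof.
move=> P0 PE Ps Pu g.
have [n] := ubnP (msr g); elim: n g => // n IH g hn hg.
have [g0 gE gc] := hg.
pose tau i := rho i + \sum_j g j i.
have tau0 i : 0 <= tau i by rewrite addr_ge0 ?sumr_ge0.
have gle i j : g i j <= tau i.
  apply: (@le_trans _ _ (\sum_j g i j)).
    by rewrite (bigD1 j) //= lerDl sumr_ge0.
  rewrite gc -/(tau i) -{2}(mul1r (tau i)); apply: ler_wpM2r => //.
  by case/andP: (sg01 i).
have tauge i j : g j i <= tau i.
  by rewrite /tau (bigD1 j) //= addrCA lerDl addr_ge0 ?sumr_ge0.
have gz i j : ~~ (0 < tau i) -> g i j = 0.
  move=> h; apply/eqP; rewrite eq_le g0 andbT; apply: le_trans (gle i j) _.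
  by rewrite leNgt.
pose P' i j := if 0 < tau i then g i j / tau i else P i j.
have tP i j : tau i * P' i j = g i j.
  rewrite /P'; case: ifP => h; first by rewrite mulrC divfK // gt_eqF.
  have -> : tau i = 0 by apply/eqP; rewrite eq_le tau0 andbT leNgt h.
  by rewrite mul0r gz ?h.
have P'0 i j : 0 <= P' i j.
  by rewrite /P'; case: ifP => h; [apply: divr_ge0 => //; exact: ltW | exact: P0].
have P'E i j : ~~ E i j -> P' i j = 0.
  by move=> nE; rewrite /P'; case: ifP => h; rewrite ?gE ?mul0r ?PE.
have P's i : \sum_j P' i j = sg i.
  case: (boolP (0 < tau i)) => h; last by rewrite -(Ps i); apply: eq_bigr => j _; rewrite /P' (negbTE h).
  rewrite (eq_bigr (fun j => g i j / tau i)); last by move=> j _; rewrite /P' h.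
  by rewrite -mulr_suml gc -/(tau i) mulfK // gt_eqF.
have tsol i : tau i = rho i + \sum_j tau j * P' j i.
  by rewrite /tau; congr (_ + _); apply: eq_bigr => j _; rewrite tP.
have sg1 i : sg i <= 1 by case/andP: (sg01 i).
case: (pselect (huniq P')) => hu.
  exists P', tau; split => // i j; by rewrite tP.
move/existsNP: hu => [u /not_implyP [hsu /existsNP [i0 /eqP ui0]]].
pose Z := [set i | u i != 0].
have trap z : z \in Z -> sg z = 1 /\ (forall j, 0 < P' z j -> j \in Z).
  rewrite inE => uz; have [h1 h2] := hsol_trap P'0 P's sg1 hsu uz.
  by split => // j /h2; rewrite inE.
case: (pselect (exists z, z \in Z /\ 0 < tau z)); last first.
  move=> nz.
  have tz z : z \in Z -> P' z =1 P z.
    move=> zZ j; rewrite /P' ifF //; apply: negbTE; apply/negP => h; apply: nz; by exists z.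
  have i0Z : i0 \in Z by rewrite inE.
  have [v [hv [j vj]]] : exists u, hsol P u /\ exists i, u i != 0.
    apply: (trap_hsol P0 i0Z).
  - by move=> i iZ; rewrite -(eq_bigr _ (fun j _ => tz i iZ j)) P's; case: (trap _ iZ).
  - by move=> i j iZ; rewrite -tz //; case: (trap _ iZ) => _; apply.
  by move/eqP: vj; rewrite (Pu _ hv).
move=> [z0 [z0Z tz0]].
pose W0 := [set i in Z | 0 < tau i].
pose s w := odflt w [pick j | 0 < P' w j].
have spos w : w \in W0 -> 0 < P' w (s w).
  rewrite inE => /andP [wZ tw]; rewrite /s; case: pickP => [j //|nj].
  have h0 : \sum_j P' w j = 0.
    by apply: big1 => j _; apply/eqP; rewrite eq_le P'0 andbT leNgt nj.
  by move: (P's w); rewrite h0 (proj1 (trap _ wZ)) => /eqP; rewrite eq_sym oner_eq0.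
have gpos w : w \in W0 -> 0 < g w (s w).
  move=> wW; rewrite -tP mulr_gt0 ?spos //.
  by move: wW; rewrite inE => /andP [_ ->].
have scl w : w \in W0 -> s w \in W0.
  move=> wW; rewrite inE; apply/andP; split.
  - move: (wW); rewrite inE => /andP [wZ _]; exact: (proj2 (trap _ wZ)) _ (spos _ wW).
  - exact: lt_le_trans (gpos _ wW) (tauge _ _).
have W0ne : W0 != finset.set0 by apply/set0Pn; exists z0; rewrite inE z0Z tz0.
have [W [sub ne cl inj]] := cycle_extract W0ne scl.
have Wsg w : w \in W -> sg w = 1.
  move=> /(fintype.subsetP sub); rewrite inE => /andP [wZ _]; exact: (proj1 (trap _ wZ)).
have [g' [hg' le' [a [b [gab g'ab]]]]] :=
  cancel_cycle hg ne cl inj (fun w wW => gpos w (fintype.subsetP sub w wW)) Wsg.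
have lt : (msr g' < n)%N.
  rewrite ltnS in hn; apply: leq_trans hn; apply: proper_card; apply/properP; split.
  - apply/fintype.subsetP => -[i j]; rewrite !inE /= => h; exact: lt_le_trans h (le' i j).
  - by exists (a, b); rewrite !inE /= ?gab ?g'ab ?ltxx.
have [P2 [tau2 [h1 h2 h3 h4 h5]]] := IH g' lt hg'.
exists P2, tau2; split => // i j; exact: le_trans (h5 i j) (le' i j).
Qed.
End Main.

Lemma sol_diff (R : realFieldType) (V : finType) (P : V -> V -> R) (rho a b : V -> R) :
  (forall i, a i = rho i + \sum_j a j * P j i) ->
  (forall i, b i = rho i + \sum_j b j * P j i) ->
  hsol P (fun i => a i - b i).
Proof.
move=> ha hb i; rewrite ha hb opprD addrACA subrr add0r -sumrB.
by apply: eq_bigr => j _; rewrite mulrBl.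
Qed.

Lemma sum_lt (R : realFieldType) (I : finType) (Pr : pred I) (F G : I -> R) i0 :
  Pr i0 -> (forall i, Pr i -> F i <= G i) -> F i0 < G i0 ->
  \sum_(i | Pr i) F i < \sum_(i | Pr i) G i.
Proof.
move=> p0 hle hlt; rewrite (bigD1 i0) //= [X in _ < X](bigD1 i0) //=.
by apply: ltr_leD => //; apply: ler_sum => i /andP [pi _]; apply: hle.
Qed.

Theorem mainTheorem7 (R : realType) (V C : finType)
  (E : rel V) (S : C -> {set V}) (r : V -> C -> R)
  (D : V -> V -> R -> R) (B : V -> R -> R)
  (hEsym : forall i j, E i j -> E j i)
  (hS : forall k, S k != finset.set0)
  (hr : forall i k, 0 <= r i k)
  (hD : forall i j, cost_fun_ok (D i j))
  (hDstrict : forall i j, strictly_increasing_nonneg (D i j))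
  (hB : forall i, cost_fun_ok (B i))
  (phi : V -> V -> C -> R) (x : V -> C -> bool) (t : V -> C -> R)
  (hfeas : feasible E S r phi x)
  (ht : is_arrival_rates r phi t)
  (l : seq V) (k : C) (l0 : V)
  (hsize : (2 <= size l)%N)
  (hclosed : nth l0 l 0 = nth l0 l (size l).-1)
  (hpos : forall p, (p < (size l).-1)%N -> 0 < phi (nth l0 l p) (nth l0 l p.+1) k)
  (htpos : 0 < t (nth l0 l 0) k) :
  exists (phi' : V -> V -> C -> R) (x' : V -> C -> bool) (t' : V -> C -> R),
    [/\ feasible E S r phi' x', is_arrival_rates r phi' t' &
        total_cost E D B phi' x' t' < total_cost E D B phi x t].
Proof.
case: hfeas => h01 hoffE hcons [t0 [ht0 hu0]] hnn.
have tnn i c : 0 <= t i c := hnn t ht i c.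
pose Pk i j := phi i j k.
pose sg i := (if i \in S k then 0 else 1) - (x i k)%:R : R.
pose rho i := r i k.
have Ps i : \sum_j Pk i j = sg i.
  by rewrite /sg -(hcons i k) [X in X - _]addrC addrK.
have sg01 i : 0 <= sg i <= 1.
  apply/andP; split.
    by rewrite -Ps sumr_ge0 // => j _; case/andP: (h01 i j k).
  rewrite /sg; case: (i \in S k); case: (x i k) => /=; lra.
have huc c : huniq (fun i j => phi i j c).
  move=> u hu i.
  pose t2 i c' := t i c' + (if c' == c then u i else 0).
  have : t2 = t.
    rewrite (hu0 _ ht) ; apply: hu0 => j c'; rewrite /t2 {1}ht.
    case: eqP => [->|_]; last first.
      by rewrite addr0; congr (_ + _); apply: eq_bigr => i' _; rewrite addr0.
    rewrite -addrA (hu j) -big_split /=; congr (_ + _).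
    by apply: eq_bigr => i' _; rewrite mulrDl.
  move/(congr1 (fun f => f i c)); rewrite /t2 eqxx => /eqP.
  by rewrite -subr_eq0 addrC addKr => /eqP.
have tge i j : t j k * phi j i k <= t i k.
  by rewrite [X in _ <= X]ht (bigD1 j) //= addrCA lerDl addr_ge0 ?sumr_ge0 // => j' _;
     rewrite mulr_ge0 //; case/andP: (h01 j' i k).
pose g0 i j := t i k * phi i j k.
have hg0 : validflow E sg rho g0.
  split.
  - by move=> i j; rewrite /g0 mulr_ge0 //; case/andP: (h01 i j k).
  - by move=> i j nE; rewrite /g0 hoffE // mulr0.
  - move=> i; rewrite /g0 -mulr_sumr Ps mulrC; congr (_ * _).
    by rewrite {1}ht.
have tloop p : (p <= (size l).-1)%N -> 0 < t (nth l0 l p) k.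
  elim: p => [|p IH] hp; first exact: htpos.
  apply: lt_le_trans (tge _ _); apply: mulr_gt0; first by apply: IH; exact: ltnW.
  exact: hpos.
pose m1 := (size l).-1.
pose W0 := [set nth l0 l (val p) | p : 'I_m1].
pose s v := nth l0 l (index v l).+1.
have W0P v : v \in W0 -> (index v l < m1)%N /\ nth l0 l (index v l) = v.
  move=> /imsetP [p _ ->]; have pl : (p < size l)%N.
    by apply: leq_trans (ltn_ord p) _; rewrite leq_pred.
  split; first by apply: leq_ltn_trans (index_nth l0 pl) (ltn_ord p).
  by rewrite nth_index // mem_nth.
have m1pos : (0 < m1)%N by rewrite /m1; case: (size l) hsize => [|[|n]].
have scl v : v \in W0 -> s v \in W0.
  move=> /W0P [hi _]; rewrite /s.
  case: (ltnP (index v l).+1 m1) => h.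
    by apply/imsetP; exists (Ordinal h).
  have -> : (index v l).+1 = m1 by apply/eqP; rewrite eqn_leq h hi.
  by rewrite -hclosed; apply/imsetP; exists (Ordinal m1pos).
have phpos v : v \in W0 -> 0 < phi v (s v) k.
  by move=> /W0P [hi hv]; rewrite -{1}hv; apply: hpos.
have gpos v : v \in W0 -> 0 < g0 v (s v).
  move=> vW; rewrite /g0 mulr_gt0 ?phpos //.
  by have [hi hv] := W0P _ vW; rewrite -hv; apply: tloop; exact: ltnW.
have sg1 v : v \in W0 -> sg v = 1.
  move=> vW; have : 0 < sg v.
    rewrite -Ps; apply: lt_le_trans (phpos _ vW) _.
    rewrite (bigD1 (s v)) //= lerDl sumr_ge0 // => j _; by case/andP: (h01 v j k).
  rewrite /sg; case: (v \in S k); case: (x v k) => /= h; lra.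
have W0ne : W0 != finset.set0 by apply/set0Pn; exists (nth l0 l 0); apply/imsetP; exists (Ordinal m1pos).
have [W [sub ne cl inj]] := cycle_extract W0ne scl.
have [g1 [hg1 le1 [a [b [gab g1ab]]]]] := cancel_cycle hg0 ne cl inj
   (fun w wW => gpos w (fintype.subsetP sub w wW)) (fun w wW => sg1 w (fintype.subsetP sub w wW)).
have P0 i j : 0 <= Pk i j by case/andP: (h01 i j k).
have PE i j : ~~ E i j -> Pk i j = 0 by move=> nE; rewrite /Pk hoffE.
have [P' [tau [[P'0 P'E P's] P'u tsol tau0 tb]]] :=
  @flow_feas R V E sg rho (fun i => hr i k) sg01 Pk P0 PE Ps (huc k) g1 hg1.
pose phi' i j c := if c == k then P' i j else phi i j c.
pose t' i c := if c == k then tau i else t i c.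
have P'le i j : P' i j <= 1.
  apply: le_trans (_ : P' i j <= sg i) _; last by case/andP: (sg01 i).
  by rewrite -P's (bigD1 j) //= lerDl sumr_ge0.
have arr : is_arrival_rates r phi' t'.
  move=> i c; rewrite /t' /phi'; case: (eqVneq c k) => [->|nck]; rewrite ?eqxx ?(negbTE nck).
    exact: tsol.
  exact: ht.
have uq : forall t2, is_arrival_rates r phi' t2 -> t2 = t'.
  move=> t2 h2; apply/funext => i; apply/funext => c.
  case: (eqVneq c k) => [->|nck].
    have hs : forall i', t2 i' k = rho i' + \sum_j t2 j k * P' j i'.
      by move=> i'; rewrite h2; congr (_ + _); apply: eq_bigr => j _; rewrite /phi' eqxx.
    have := P'u _ (@sol_diff _ _ _ _ _ _ hs tsol) i.
    by move/eqP; rewrite subr_eq0 => /eqP ->; rewrite /t' eqxx.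
  have hs : forall i', t2 i' c = r i' c + \sum_j t2 j c * phi j i' c.
    by move=> i'; rewrite h2; congr (_ + _); apply: eq_bigr => j _; rewrite /phi' (negbTE nck).
  have := huc c _ (@sol_diff _ _ _ _ _ _ hs (ht^~ c)) i.
  by move/eqP; rewrite subr_eq0 => /eqP ->; rewrite /t' (negbTE nck).
have t'0 i c : 0 <= t' i c by rewrite /t'; case: ifP.
exists phi', x, t'; split => //.
  split.
  - move=> i j c; rewrite /phi'; case: (eqVneq c k) => _; last exact: h01.
    by rewrite P'0 P'le.
  - by move=> i j c nE; rewrite /phi'; case: ifP => _; [exact: P'E | exact: hoffE].
  - move=> i c; rewrite /phi'; case: (eqVneq c k) => [->|nck]; rewrite ?eqxx ?(negbTE nck);
      last exact: hcons.
    by rewrite P's /sg addrC subrK.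
  - by exists t'; split.
  - by move=> t2 h2 i c; rewrite (uq _ h2).
have [_ g0E _] := hg0.
have Eab : E a b by apply/negPn/negP => nE; move: gab; rewrite g0E // ltxx.
have Fnn i j : 0 <= link_flow phi' t' i j.
  apply: sumr_ge0 => c _; rewrite /phi'; case: ifP => _; first by rewrite mulr_ge0.
  by rewrite mulr_ge0 //; case/andP: (h01 j i c).
have Fle i j : link_flow phi' t' i j <= link_flow phi t i j.
  apply: ler_sum => c _; rewrite /phi' /t'; case: (eqVneq c k) => [->|nck];
    rewrite ?eqxx ?(negbTE nck) //.
  exact: le_trans (tb j i) (le1 j i).
have Flt : link_flow phi' t' b a < link_flow phi t b a.
  apply: (@sum_lt _ _ xpredT _ _ k) => // [c _|].
    rewrite /phi' /t'; case: (eqVneq c k) => [->|nck]; rewrite ?eqxx ?(negbTE nck) //.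
    exact: le_trans (tb a b) (le1 a b).
  rewrite /phi' /t' eqxx; apply: le_lt_trans (tb a b) _; by rewrite g1ab.
rewrite /total_cost ltrD2r.
apply: (@sum_lt _ _ xpredT _ _ b) => // [i _|].
  apply: ler_sum => j _; case: (hD i j) => _ hm _ _ _; exact: hm.
apply: (@sum_lt _ _ (fun j => E b j) _ _ a); first exact: hEsym.
  by move=> j _; case: (hD b j) => _ hm _ _ _; exact: hm.
exact: hDstrict.
Qed.
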